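(* Let $X_1,\ldots,X_n$ be non-empty sets, $S\subset X_1\times\cdots\times X_n$ a finite set, and $M\subset S$ a maximal good subset of $S$. Let $C(S)$ be the space of functions on $S$, $U(S)$ the subspace of functions $f$ on $S$ of the form $f(x_1,\ldots,x_n)=u_1(x_1)+\cdots+u_n(x_n)$ on $S$ with $u_i$ functions on $\Pi_iS$, and $U(S)^\perp=\{\mu\in C(S)^*:\mu(f)=0\ \forall f\in U(S)\}$. Then $\dim U(S)^\perp=|S|-|M|$, and a basis of $U(S)^\perp$ is given by the set of measures $\mu_L$, where $L$ ranges over loops of the form $L=\{x,y_2,\ldots,y_k\}$ with $x\in S\setminus M$ and $y_2,\ldots,y_k\in M$.
   Context: $\Pi_i$ denotes the canonical projection onto $X_i$. A subset $T$ is good if every function $f$ on $T$ can be written as $f(x_1,\ldots,x_n)=u_1(x_1)+\cdots+u_n(x_n)$ on $T$ for suitable functions $u_i$ on $X_i$; $M$ is a maximal good subset of $S$ if it is good and no good subset of $S$ strictly contains it. For points $x_1,\ldots,x_k$ (with $x_j=(x_{j1},\ldots,x_{jn})$) and numbers $c_j$, the formal sum $\sum_jc_jx_j$ vanishes if for every $i$ and every $a\in X_i$, $\sum_{j:\,x_{ji}=a}c_j=0$. A non-empty finite set $L=\{x_1,\ldots,x_k\}$ of distinct points is a loop if there are non-zero integers $n_1,\ldots,n_k$ with $\sum_jn_jx_j$ vanishing and no strictly smaller non-empty subset of $L$ has this property; such integers can be taken with $\gcd=1$, uniquely up to a global sign. For such a loop, $\mu_L$ is the measure on $S$ with $\mu_L(x_j)=n_j/(|n_1|+\cdots+|n_k|)$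 and $\mu_L(x)=0$ for $x\notin L$ (for a fixed choice of sign). *)

(* Defs.v *)
From HB Require Import structures.
From mathcomp Require Import all_boot all_order all_algebra.
From mathcomp Require Import finmap.
Set Implicit Arguments. Unset Strict Implicit. Unset Printing Implicit Defensive.
Import Order.TTheory GRing.Theory Num.Theory.
Local Open Scope ring_scope.
Local Open Scope fset_scope.

Definition point (n : nat) (X : 'I_n -> choiceType) :=
  {dffun forall i : 'I_n, X i}.

Section Defs.
Variables (R : realFieldType) (n : nat) (X : 'I_n -> choiceType).
Local Notation P := (point X).

Definition good (T : {fset P}) : Prop :=
  forall f : T -> R, exists u : forall i : 'I_n, X i -> R,
    forall x : T, f x = \sum_(i < n) u i (val x i).

Definition maximal_good (S M : {fset P}) : Prop :=
  [/\ M `<=` S, good M &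
      forall T : {fset P}, M `<` T -> T `<=` S -> ~ good T].

(* The formal sum  sum_{x in L} c x * x  vanishes. *)
Definition vanishes (L : {fset P}) (c : P -> int) : Prop :=
  forall (i : 'I_n) (a : X i), \sum_(x <- L | x i == a) c x = 0.

Definition has_vanishing_nonzero_sum (L : {fset P}) : Prop :=
  exists c : P -> int, (forall x, x \in L -> c x != 0) /\ vanishes L c.

Definition is_loop (L : {fset P}) : Prop :=
  [/\ L != fset0, has_vanishing_nonzero_sum L &
      forall L' : {fset P}, L' != fset0 -> L' `<` L ->
        ~ has_vanishing_nonzero_sum L'].

Definition C (S : {fset P}) := {ffun S -> GRing.regular R}.

Definition inU (S : {fset P}) (f : C S) : Prop :=
  exists u : forall i : 'I_n, X i -> R,
    forall x : S, f x = \sum_(i < n) u i (val x i).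

(* Measures on S (the dual of C(S)), acting by mu(f) = sum_x mu(x) f(x). *)
Definition integrate (S : {fset P}) (mu f : C S) : R :=
  \sum_(x : S) mu x * f x.

Definition inUperp (S : {fset P}) (mu : C S) : Prop :=
  forall f : C S, inU f -> integrate mu f = 0.

(* mu is the measure mu_L of the loop L (for one of the two sign choices):
   mu(x_j) = n_j / (|n_1|+...+|n_k|), with non-zero integers n_j of gcd 1
   such that sum_j n_j x_j vanishes, and mu = 0 off L. *)
Definition is_loop_measure (S : {fset P}) (L : {fset P}) (mu : C S) : Prop :=
  exists c : P -> int,
    [/\ forall x, x \in L -> c x != 0,
        vanishes L c,
        (forall d : nat, (forall x, x \in L -> (d %| `|c x|)%N) -> d = 1%N) &
        forall x : S, mu x =
          if val x \in L then (c (val x))%:~R / (\sum_(y <- L) `|c y|%N)%:R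
          else 0].

Definition admissible_loop (S M L : {fset P}) : Prop :=
  is_loop L /\ exists x : P, [/\ x \in S, x \notin M, x \in L & L `\ x `<=` M].

End Defs.

(* Main.v *)
Require Import Defs.
From HB Require Import structures.
From mathcomp Require Import all_boot all_order all_algebra.
From mathcomp Require Import finmap.
From Stdlib Require Import ClassicalEpsilon.
Import Order.TTheory GRing.Theory Num.Theory.
Local Open Scope ring_scope.
Local Open Scope fset_scope.

Set Implicit Arguments. Unset Strict Implicit. Unset Printing Implicit Defensive.

Lemma sum_rank (V : nmodType) (T : finType) (G : 'I_#|T| -> V) :
  \sum_j G j = \sum_(t : T) G (enum_rank t).
Proof. exact: (reindex enum_rank (onW_bij _ (enum_rank_bij T))). Qed.

Section Main.
Variables (R : realFieldType) (n : nat) (X : 'I_n -> choiceType).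
Local Notation P := (point X).

Lemma group_sum (T K : eqType) (s : seq T) (k : T -> K) (F : T -> R) (g : K -> R) :
  (forall a, \sum_(y <- s | k y == a) F y = 0) -> \sum_(y <- s) F y * g (k y) = 0.
Proof.
move=> H.
have -> : \sum_(y <- s) F y * g (k y) =
   \sum_(y <- s) \sum_(a <- undup (map k s) | k y == a) F y * g a.
  apply: eq_big_seq => y ys.
  rewrite -big_filter.
  have -> : [seq a <- undup [seq k i | i <- s] | k y == a] = [:: k y].
    rewrite -(filter_pred1_uniq (undup_uniq [seq k i | i <- s])); last first.
      by rewrite mem_undup; apply: map_f.
    by apply: eq_filter => a /=; rewrite eq_sym.
  by rewrite big_seq1.
rewrite (exchange_big_dep predT) //=.
apply: big1 => a _.
have -> : \sum_(i <- s | true && (k i == a)) F i * g a = (\sum_(i <- s | k i == a) F i) * g a.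
  by rewrite mulr_suml.
by rewrite H mul0r.
Qed.

Lemma good_zero (M : {fset P}) (nu : P -> R) : good R M ->
  (forall u : forall i : 'I_n, X i -> R,
     \sum_(y <- M) nu y * \sum_(i < n) u i (y i) = 0) ->
  forall y, y \in M -> nu y = 0.
Proof.
move=> gM H.
have [u Hu] := gM (fun y : M => nu (val y)).
have H2 : \sum_(y : M) nu (val y) * nu (val y) = 0.
  transitivity (\sum_(y <- M) nu y * \sum_(i < n) u i (y i)); last exact: H.
  rewrite (big_seq_fsetE _ M predT (fun y => nu y * \sum_(i < n) u i (y i))) /=.
  apply: eq_bigr => y _; by rewrite Hu.
move=> y yM.
have := psumr_eq0P (P := predT) (F := fun y : M => nu (val y) * nu (val y)) _ H2 (i := [` yM]) isT.
  rewrite /=.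
move=> /(_ _)/eqP; rewrite mulf_eq0 orbb => /(_ _)/eqP; apply.
by move=> i _; rewrite -expr2 sqr_ge0.
Qed.

Lemma vanishes_sum (T : {fset P}) (c : P -> int) (u : forall i : 'I_n, X i -> R) :
  vanishes T c -> \sum_(y <- T) (c y)%:~R * \sum_(i < n) u i (y i) = 0 :> R.
Proof.
move=> H.
under eq_bigr do rewrite mulr_sumr.
rewrite exchange_big /=; apply: big1 => i _.
apply: (@group_sum _ (X i) _ (fun y : P => y i) _ (u i)) => a.
by rewrite -rmorph_sum /= H.
Qed.

Lemma good_zero_int (M : {fset P}) (e : P -> int) : good R M -> vanishes M e ->
  forall y, y \in M -> e y = 0.
Proof.
move=> gM H y yM; apply/eqP; rewrite -(intr_eq0 R); apply/eqP.
apply: (good_zero (nu := fun y => (e y)%:~R)) gM _ y yM => u.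
exact: vanishes_sum.
Qed.

Lemma vanishes_incl (L T : {fset P}) (c : P -> int) : L `<=` T ->
  (forall y, y \in T -> y \notin L -> c y = 0) ->
  vanishes L c <-> vanishes T c.
Proof.
move=> LT H.
have E : forall i a, \sum_(y <- L | y i == a) c y = \sum_(y <- T | y i == a) c y.
  move=> i a; rewrite big_mkcond [in RHS]big_mkcond /=.
  apply: big_fset_incl => // y yT yL; by rewrite H // if_same.
by split=> V i a; [rewrite -E | rewrite E]; apply: V.
Qed.

Lemma vanishes_ext (L T : {fset P}) (c : P -> int) : L `<=` T ->
  vanishes L c -> vanishes T (fun y => if y \in L then c y else 0).
Proof.
move=> LT V; apply/(vanishes_incl LT) => [y _ /negbTE -> //|i a].
rewrite -[RHS](V i a) big_seq_cond [RHS]big_seq_cond; apply: eq_bigr => y /andP[yL _]; by rewrite yL.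
Qed.


Lemma x_zero (M : {fset P}) (x : P) (d : P -> int) : good R M -> x \notin M ->
  vanishes (x |` M) d -> d x = 0 -> forall y, y \in x |` M -> d y = 0.
Proof.
move=> gM xM V dx0.
have VM : vanishes M d.
  apply/(vanishes_incl (T := x |` M)); first exact: fsubsetU1.
    by move=> y; rewrite in_fset1U => /orP[/eqP -> //|->].
  exact: V.
move=> y; rewrite in_fset1U => /orP[/eqP -> //|yM].
exact: (good_zero_int gM VM).
Qed.

Lemma propo (M : {fset P}) (x : P) (c d : P -> int) : good R M -> x \notin M ->
  vanishes (x |` M) c -> vanishes (x |` M) d ->
  forall y, y \in x |` M -> c x * d y = d x * c y.
Proof.
move=> gM xM Vc Vd y yT; apply/eqP; rewrite -subr_eq0; apply/eqP.
apply: (x_zero (d := fun y => c x * d y - d x * c y) gM xM) => //; last first.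
  by rewrite mulrC subrr.
move=> i a; rewrite sumrB -!mulr_sumr Vc Vd !mulr0 subrr //.
Qed.


Lemma notgood_vanish (T : {fset P}) : ~ good R T ->
  exists c : P -> int, vanishes T c /\ exists2 y, y \in T & c y != 0.
Proof.
move=> ngT.
case: (classic (exists c : P -> int, vanishes T c /\ exists2 y, y \in T & c y != 0)) => // Hn.
exfalso; apply: ngT.
have H : forall c : P -> int, vanishes T c -> forall y, y \in T -> c y = 0.
  move=> c Vc y yT; apply/eqP; apply/negP => /negP cy; apply: Hn.
  by exists c; split=> //; exists y.
pose A : 'M[rat]_(#|{: T}|, #|{: 'I_n * T}|) := \matrix_(j, l)
   (let p : 'I_n * T := enum_val l in (val (enum_val j : T)) p.1 == (val p.2) p.1)%:R.
have rfA : row_free A.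
  apply/negP => nfA.
  have rk : (\rank A < #|{: T}|)%N.
    by rewrite ltn_neqAle rank_leq_row andbT; apply/negP; exact: nfA.
  have kA : kermx A != 0.
    apply/negP => /eqP k0; move: (mxrank_ker A); rewrite k0 mxrank0 => /esym/eqP.
    by rewrite subn_eq0 leqNgt rk.
  have [j0 vn0] : exists j0, row j0 (kermx A) != 0.
    case: (classic (exists j0, row j0 (kermx A) != 0)) => // Hr.
    exfalso; move/negP: kA; apply; apply/eqP/row_matrixP => j; rewrite row0.
    by apply/eqP; apply: contraT => Hj; exfalso; apply: Hr; exists j.
  set v := row j0 (kermx A) in vn0.
  have vA : v *m A = 0 by rewrite -row_mul mulmx_ker row0.
  have [j1 vj1] : exists j1, v 0 j1 != 0.
    case: (classic (exists j1, v 0 j1 != 0)) => // Hr.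
    exfalso; move/negP: vn0; apply; apply/eqP/matrixP => i j; rewrite ord1 [RHS]mxE.
    by apply/eqP; apply: contraT => Hj; exfalso; apply: Hr; exists j.
  pose d : int := \prod_(j < #|{: T}|) denq (v 0 j).
  pose cv (j : 'I_#|{: T}|) : int := numq (v 0 j) * \prod_(j' < #|{: T}| | j' != j) denq (v 0 j').
  have Hcv : forall j, (cv j)%:~R = v 0 j * d%:~R :> rat.
    move=> j; rewrite /cv /d [in RHS](bigD1 j) //= !intrM numqE mulrA //.
  have d0 : d%:~R != 0 :> rat.
    rewrite intr_eq0; apply/prodf_neq0 => j _; exact: denq_neq0.
  pose c (y : P) : int := if insub y is Some t then cv (enum_rank t) else 0.
  have Hc : forall t : T, c (val t) = cv (enum_rank t) by move=> t; rewrite /c valK.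
  have Vc : vanishes T c.
    move=> i a; rewrite big_seq_fsetE /=.
    under eq_bigr do rewrite Hc.
    case: (pickP (fun t : T => val t i == a)) => [t0 /eqP Ht0 | none]; last first.
      by rewrite big_pred0.
    apply: (@intr_inj rat); rewrite rmorph_sum /=.
    under eq_bigr do rewrite Hcv.
    rewrite -mulr_suml; apply/eqP; rewrite mulf_eq0; apply/orP; left; apply/eqP.
    have := congr1 (fun M : 'M[rat]_(1, #|{: 'I_n * T}|) => M 0 (enum_rank ((i, t0) : 'I_n * T))) vA.
    rewrite /= !mxE sum_rank => E; apply: etrans E.
    rewrite big_mkcond /=; apply: eq_bigr => t _.
    have EA : A (enum_rank t) (enum_rank (i, t0)) = (val t i == val t0 i)%:R.
      by rewrite /A mxE !enum_rankK.
    rewrite EA Ht0.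
    by case: (val t i == a); rewrite ?mulr1 ?mulr0.
  have cj1 : c (val (enum_val j1)) != 0.
    rewrite Hc enum_valK -(intr_eq0 rat) Hcv mulf_eq0 negb_or vj1 //.
  by move/eqP: cj1; apply; apply: H Vc _ (fsvalP _).
have [B AB] := row_freeP rfA.
pose Ar := map_mx (@ratr R) A.
pose Br := map_mx (@ratr R) B.
have ABr : Ar *m Br = 1%:M by rewrite -map_mxM AB map_mx1.
move=> f.
pose F : 'cV[R]_#|{: T}| := \col_j f (enum_val j).
pose W := Br *m F.
exists (fun i a => \sum_(t : T) ((a == val t i)%:R) * W (enum_rank ((i, t) : 'I_n * T)) 0).
move=> x.
have -> : f x = (Ar *m W) (enum_rank x) 0 by rewrite mulmxA ABr mul1mx mxE enum_rankK.
rewrite mxE sum_rank [RHS]pair_bigA /=; apply: eq_bigr => [[i t]] _ /=.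
have EA : Ar (enum_rank x) (enum_rank (i, t)) = (val x i == val t i)%:R.
  by rewrite /Ar /A !mxE !enum_rankK rmorph_nat.
by rewrite EA.
Qed.


Lemma normalize (T : {fset P}) (c : P -> int) (x : P) : x \in T ->
  vanishes T c -> c x != 0 ->
  exists c' : P -> int, [/\ vanishes T c',
     forall y, y \in T -> (c' y == 0) = (c y == 0) &
     forall d : nat, (forall y, y \in T -> c' y != 0 -> (d %| `|c' y|)%N) -> d = 1%N].
Proof.
move=> xT Vc cx.
pose g : nat := \big[gcdn/0%N]_(t : T) `|c (val t)|%N.
have gd : forall y, y \in T -> (g %| `|c y|)%N.
  move=> y yT; have /dvdn_biggcdP H := dvdnn g; exact: (H [` yT] isT).
have g0 : (0 < g)%N.
  rewrite lt0n; apply/negP => /eqP g0; move: (gd x xT); rewrite g0 dvd0n absz_eq0.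
  by rewrite (negbTE cx).
have gz : (g%:Z != 0) by rewrite -lt0n.
pose c' (y : P) : int := (c y %/ g%:Z)%Z.
have Hc : forall y, y \in T -> c' y * g%:Z = c y.
  by move=> y yT; apply: divzK; exact: gd.
exists c'; split.
- move=> i a; apply: (mulIf gz); rewrite mul0r.
  transitivity (\sum_(y <- T | y i == a) c y); last exact: Vc.
  rewrite mulr_suml big_seq_cond [RHS]big_seq_cond. apply: eq_bigr => y /andP[yT _]. exact: (Hc y yT).
- move=> y yT; rewrite -(Hc y yT) mulf_eq0 (negbTE gz) orbF //.
- move=> d Hd.
  have : (d * g %| g)%N.
    apply/dvdn_biggcdP => t _.
    have tT := fsvalP t.
    case: (eqVneq (c' (val t)) 0) => [E|E].
      by rewrite -(Hc _ tT) E mul0r dvdn0.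
    by rewrite -(Hc _ tT) abszM dvdn_mul // Hd.
  by rewrite -{2}(mul1n g) dvdn_pmul2r // dvdn1 => /eqP.
Qed.


Lemma adm_sub (S M L : {fset P}) (x : P) : M `<=` S -> admissible_loop S M L -> x \in L -> x \notin M ->
  [/\ x \in S, L `<=` x |` M & L `<=` S].
Proof.
move=> MS [_ [x0 [x0S x0M x0L LM]]] xL xM.
have ex : x = x0.
  case: (eqVneq x x0) => [//|nx]; exfalso; move/negP: xM; apply.
  by apply: (fsubsetP LM); rewrite in_fsetD1 nx.
subst x0.
have LT : L `<=` x |` M.
  apply/fsubsetP => y yL; rewrite in_fset1U; case: (eqVneq y x) => //= nyx.
  by apply: (fsubsetP LM); rewrite in_fsetD1 nyx.
split=> //; apply: (fsubset_trans LT).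
by rewrite fsubUset fsub1set x0S MS.
Qed.


Lemma adm_unique (S M L1 L2 : {fset P}) (x : P) : maximal_good R S M ->
  admissible_loop S M L1 -> admissible_loop S M L2 ->
  x \in L1 -> x \in L2 -> x \notin M -> L1 = L2.
Proof.
move=> [MS gM _] A1 A2 x1 x2 xM.
have [_ T1 _] := adm_sub MS A1 x1 xM.
have [_ T2 _] := adm_sub MS A2 x2 xM.
case: A1 => [[_ [c1 [nz1 V1]] _] _].
case: A2 => [[_ [c2 [nz2 V2]] _] _].
pose d1 y := if y \in L1 then c1 y else 0.
pose d2 y := if y \in L2 then c2 y else 0.
have V1' : vanishes (x |` M) d1 := vanishes_ext T1 V1.
have V2' : vanishes (x |` M) d2 := vanishes_ext T2 V2.
have Hp := propo gM xM V1' V2'.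
have m1 : forall y, (y \in L1) = (d1 y != 0).
  by move=> y; rewrite /d1; case: ifP => yL; [rewrite nz1 | rewrite eqxx].
have m2 : forall y, (y \in L2) = (d2 y != 0).
  by move=> y; rewrite /d2; case: ifP => yL; [rewrite nz2 | rewrite eqxx].
have d1x : d1 x != 0 by rewrite -m1.
have d2x : d2 x != 0 by rewrite -m2.
apply/fsetP => y.
case yT: (y \in x |` M); last first.
  have -> : (y \in L1) = false by apply/negP => /(fsubsetP T1); rewrite yT.
  have -> : (y \in L2) = false by apply/negP => /(fsubsetP T2); rewrite yT.
  by [].
rewrite m1 m2; have E := Hp y yT.
apply/idP/idP => H.
  have : d2 x * d1 y != 0 by rewrite mulf_neq0.
  by rewrite -E mulf_eq0 negb_or => /andP[_ ->].
have : d1 x * d2 y != 0 by rewrite mulf_neq0.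
by rewrite E mulf_eq0 negb_or => /andP[_ ->].
Qed.


Lemma exists_loop (S M : {fset P}) (x : P) : maximal_good R S M -> x \in S -> x \notin M ->
  exists L, [/\ admissible_loop S M L, x \in L & exists c : P -> int,
   [/\ forall y, y \in L -> c y != 0, vanishes L c &
       forall d : nat, (forall y, y \in L -> (d %| `|c y|)%N) -> d = 1%N]].
Proof.
move=> [MS gM maxM] xS xM.
have ngT : ~ good R (x |` M).
  apply: maxM.
    rewrite fproperE fsubsetU1 /=; apply/negP => /fsubsetP/(_ x (fset1U1 x M)).
    by apply/negP.
  by rewrite fsubUset fsub1set xS MS.
have [c0 [V0 [y0 y0T c0y0]]] := notgood_vanish ngT.
have c0x : c0 x != 0.
  apply/negP => /eqP c0x; move/eqP: c0y0; apply; exact: (x_zero gM xM V0 c0x y0T).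
have [c [Vc Hz Hg]] := normalize (fset1U1 x M) V0 c0x.
have cx : c x != 0 by rewrite Hz ?fset1U1.
pose L := [fset y in x |` M | c y != 0].
have memL : forall y, (y \in L) = (y \in x |` M) && (c y != 0).
  by move=> y; rewrite !inE.
have LT : L `<=` x |` M by apply/fsubsetP => y; rewrite memL => /andP[].
have xL : x \in L by rewrite memL fset1U1.
have VL : vanishes L c.
  apply/(vanishes_incl LT) => // y yT; rewrite memL yT /= negbK => /eqP //.
exists L; split => //.
  split.
    split.
    - by apply/fset0Pn; exists x.
    - by exists c; split => // y; rewrite memL => /andP[].
    - move=> L' L'0 L'L [c' [nz' V']].
      have L'T : L' `<=` x |` M := fsubset_trans (fproper_sub L'L) LT.
      pose d y := if y \in L' then c' y else 0.
      have Vd : vanishes (x |` M) d := vanishes_ext L'T V'.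
      have Hp := propo gM xM Vc Vd.
      have [z zL'] := fset0Pn _ L'0.
      have dz : d z != 0 by rewrite /d zL' nz'.
      have dx : d x != 0.
        apply/negP => /eqP dx0; have := Hp z (fsubsetP L'T z zL').
        rewrite dx0 mul0r => /eqP; rewrite mulf_eq0 (negbTE cx) (negbTE dz).
        by [].
      have : L `<=` L'.
        apply/fsubsetP => y; rewrite memL => /andP[yT cy].
        have : d y != 0.
          have : d x * c y != 0 by rewrite mulf_neq0.
          by rewrite -(Hp y yT) mulf_eq0 negb_or => /andP[_].
        by rewrite /d; case: ifP => // _; rewrite eqxx.
      by move: L'L; rewrite fproperE => /andP[_ /negP].
  exists x; split => //.
  apply/fsubsetP => y; rewrite in_fsetD1 memL in_fset1U.
  move=> /andP[nyx /andP[/orP[/eqP yx|//] _]].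
  by rewrite yx eqxx in nyx.
exists c; split => //.
- by move=> y; rewrite memL => /andP[].
- move=> d Hd; apply: Hg => y yT cy; apply: Hd; rewrite memL yT cy.
  by [].
Qed.


Lemma loop_measure_exists (S M L : {fset P}) : maximal_good R S M ->
  admissible_loop S M L -> exists mu : C R S, is_loop_measure L mu.
Proof.
move=> mg AL; have AL' := AL; case: AL' => [_ [x [xS xM xL _]]].
have [L' [AL' xL' [c [nz V g]]]] := exists_loop mg xS xM.
have E := adm_unique mg AL' AL xL' xL xM; subst L'.
exists [ffun y : S => if val y \in L then
          (c (val y))%:~R / (\sum_(z <- L) `|c z|%N)%:R else 0 : R].
by exists c; split=> // y; rewrite ffunE.
Qed.

Lemma measure_perp (S L : {fset P}) (mu : C R S) : L `<=` S ->
  is_loop_measure L mu -> inUperp mu.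
Proof.
move=> LS [c [nz V _ Hmu]] f [u Hu].
pose Sg : R := (\sum_(y <- L) `|c y|%N)%:R.
rewrite /integrate.
transitivity (\sum_(y <- S) (if y \in L then (c y)%:~R / Sg else 0) * \sum_(i < n) u i (y i)).
  rewrite (big_seq_fsetE _ S predT (fun y => (if y \in L then (c y)%:~R / Sg else 0) * \sum_(i < n) u i (y i))) /=.
  by apply: eq_bigr => y _; rewrite Hmu Hu.
rewrite -(big_fset_incl _ LS); last by move=> y _ /negbTE ->; rewrite mul0r.
transitivity (\sum_(y <- L) (c y)%:~R * (\sum_(i < n) u i (y i)) / Sg).
  rewrite big_seq [RHS]big_seq; apply: eq_bigr => y yL; by rewrite yL mulrAC.
by rewrite -mulr_suml (vanishes_sum u V) mul0r.
Qed.


Definition xof (M L : {fset P}) (d : P) : P := head d [seq y <- L | y \notin M].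

Lemma xof_spec (S M L : {fset P}) d : admissible_loop S M L ->
  xof M L d \in L /\ xof M L d \notin M.
Proof.
case=> _ [x [_ xM xL _]].
have hs : forall y, y \in [seq y <- L | y \notin M] -> y \in L /\ y \notin M.
  by move=> y; rewrite mem_filter => /andP[].
have xs : x \in [seq y <- L | y \notin M] by rewrite mem_filter xM.
rewrite /xof; move: hs xs; case: [seq y <- L | y \notin M] => [//|h t] hs _.
by apply: hs; rewrite mem_head.
Qed.

Lemma nonM_eq (S M L : {fset P}) y z : M `<=` S -> admissible_loop S M L ->
  y \in L -> y \notin M -> z \in L -> z \notin M -> z = y.
Proof.
move=> MS AL yL yM zL zM; have [_ LT _] := adm_sub MS AL yL yM.
move: (fsubsetP LT z zL); rewrite in_fset1U (negbTE zM) orbF => /eqP //.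
Qed.

Definition ev (S : {fset P}) (nu : C R S) (y : P) : R :=
  if insub y is Some t then nu t else 0.

Lemma evE (S : {fset P}) (nu : C R S) (t : S) : ev nu (val t) = nu t.
Proof. by rewrite /ev valK. Qed.

Lemma mu_val (S M L : {fset P}) (mu : C R S) d (z : S) : M `<=` S ->
  admissible_loop S M L -> is_loop_measure L mu -> val z \notin M ->
  (mu z != 0) = (val z == xof M L d).
Proof.
move=> MS AL [c [nz V _ Hmu]] zM.
have [xL xM] := xof_spec d AL.
rewrite Hmu; case: ifP => zL.
  rewrite (nonM_eq MS AL xL xM zL zM) eqxx.
  rewrite mulf_neq0 // ?intr_eq0 ?nz // invr_eq0 pnatr_eq0.
  rewrite (big_fsetD1 _ zL) /= addn_eq0 absz_eq0 negb_and nz //.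
rewrite eqxx /=; apply/esym/negbTE; apply: contraFN zL => /eqP E.
have -> : val z = xof M L d by exact: E.
exact: xL.
Qed.

Lemma perp_zero (S M : {fset P}) (nu : C R S) : maximal_good R S M ->
  inUperp nu -> (forall z : S, val z \notin M -> nu z = 0) -> nu = 0.
Proof.
move=> [MS gM _] Hp Hz; apply/ffunP => z; rewrite ffunE.
case: (boolP (val z \in M)) => zM; last exact: Hz.
rewrite -evE; apply: (good_zero (nu := ev nu) gM) => // u.
rewrite (big_fset_incl _ MS); last first.
  move=> y yS yM; have -> : y = val [` yS] by [].
  by rewrite evE Hz // mul0r.
rewrite (big_seq_fsetE _ S predT (fun y => ev nu y * \sum_(i < n) u i (y i))) /=.
transitivity (integrate nu [ffun t : S => \sum_(i < n) u i (val t i)]).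
  by rewrite /integrate; apply: eq_bigr => t _; rewrite evE ffunE.
by apply: Hp; exists u => t; rewrite ffunE.
Qed.

End Main.

Section Core.
Variables (R : realFieldType) (n : nat) (X : 'I_n -> choiceType).
Local Notation P := (point X).

Lemma core (S M : {fset P}) (Ls : seq {fset P}) (mu : {fset P} -> C R S) (d : P) :
  maximal_good R S M -> uniq Ls -> (forall L, L \in Ls <-> admissible_loop S M L) ->
  (forall L, admissible_loop S M L -> is_loop_measure L (mu L)) ->
  [/\ forall m, m \in <<[seq mu L | L <- Ls]>>%VS <-> inUperp m,
      free [seq mu L | L <- Ls] & size Ls = (#|` S| - #|` M|)%N].
Proof.
move=> mg uLs HLs Hmu; have [MS gM _] := mg.
set s := [seq mu L | L <- Ls].
pose x_ L := xof M L d.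
have Hx : forall L, L \in Ls -> [/\ x_ L \in L, x_ L \notin M & x_ L \in S].
  move=> L /HLs AL; have [xL xM] := xof_spec d AL.
  by have [xS _ _] := adm_sub MS AL xL xM.
have inj : {in Ls &, injective x_}.
  move=> L1 L2 L1s L2s E; have [x1L x1M _] := Hx _ L1s; have [x2L _ _] := Hx _ L2s.
  have x1L2 : x_ L1 \in L2 by rewrite E.
  exact: (adm_unique mg ((HLs _).1 L1s) ((HLs _).1 L2s) x1L x1L2 x1M).
have surj : forall y, y \in S -> y \notin M -> exists2 L, L \in Ls & x_ L = y.
  move=> y yS yM; have [L [AL yL _]] := exists_loop mg yS yM.
  have Ls' : L \in Ls by apply/HLs.
  have [xL xM _] := Hx _ Ls'.
  by exists L => //; apply: (nonM_eq MS AL yL yM xL xM).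
have perp : forall v, v \in s -> inUperp v.
  move=> v /mapP [L Ls' ->]; have AL := (HLs L).1 Ls'.
  have [xL xM _] := Hx _ Ls'; have [_ _ LS] := adm_sub MS AL xL xM.
  exact: (measure_perp LS (Hmu L AL)).
have mv : forall L (z : S), L \in Ls -> val z \notin M -> (mu L z != 0) = (val z == x_ L).
  move=> L z Ls' zM; exact: (mu_val d MS ((HLs L).1 Ls') (Hmu L ((HLs L).1 Ls')) zM).
have sizeE : size Ls = (#|` S| - #|` M|)%N.
  rewrite -(cardfsDS MS) -(size_map x_).
  apply: perm_size; apply: uniq_perm.
  - by rewrite map_inj_in_uniq.
  - exact: fset_uniq.
  move=> y; apply/idP/idP.
    by move=> /mapP [L Ls' ->]; have [_ xM xS] := Hx _ Ls'; rewrite in_fsetD xM xS.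
  rewrite in_fsetD => /andP[yM yS]; have [L Ls' <-] := surj y yS yM.
  exact: map_f.
have perp_span : forall m, m \in <<s>>%VS -> inUperp m.
  move=> m ms; rewrite (coord_span (X := in_tuple s) ms) => f fU.
  rewrite /integrate.
  under eq_bigr do rewrite sum_ffunE mulr_suml.
  rewrite exchange_big /=; apply: big1 => i _.
  under eq_bigr do rewrite ffunE -mulrA.
  rewrite -mulr_sumr.
  have := perp _ (mem_nth 0 (ltn_ord i)) f fU; rewrite /integrate => ->.
  by rewrite mulr0.
have free_s : free s.
  apply/(@freeP _ _ _ (in_tuple s)) => k Hk i.
  have iL : (i < size Ls)%N by rewrite -(size_map mu); exact: ltn_ord.
  pose Li := nth fset0 Ls i.
  have Lis : Li \in Ls by exact: mem_nth.
  have [_ xiM xiS] := Hx _ Lis.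
  have := congr1 (fun v : C R S => v [` xiS]) Hk.
  rewrite /= sum_ffunE ffunE (bigD1 i) //= ffunE.
  have nthE : forall j : 'I_(size s), (in_tuple s)`_j = mu (nth fset0 Ls j).
    move=> j; rewrite in_tupleE (nth_map fset0) //.
    by rewrite -(size_map mu); exact: ltn_ord.
  rewrite big1 ?addr0; last first.
    move=> j nji; rewrite ffunE nthE.
    have jL : (j < size Ls)%N by rewrite -(size_map mu); exact: ltn_ord.
    have Ljs : nth fset0 Ls j \in Ls by exact: mem_nth.
    apply/eqP; rewrite mulf_eq0; apply/orP; right.
    apply/negPn; rewrite mv //=; apply/negP => /eqP E.
    move/negP: nji; apply; apply/eqP/val_inj => /=.
    apply/eqP; rewrite -(nth_uniq fset0 jL iL uLs); apply/eqP.
    by apply: inj => //.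
  move/eqP; rewrite mulf_eq0 => /orP[/eqP //|].
  rewrite nthE => H; exfalso; move: H; apply/negP; rewrite (mv _ [` xiS]) //= eqxx.
split=> // m; split=> [|Hm]; first exact: perp_span.
pose w := \sum_(L <- Ls) (ev m (x_ L) / ev (mu L) (x_ L)) *: mu L.
have ws : w \in <<s>>%VS.
  rewrite /w big_seq; apply: memv_suml => L LLs; apply: memvZ; apply: memv_span; exact: map_f.
have wp := perp_span w ws.
have nu0 : m - w = 0.
  apply: (perp_zero mg).
    move=> f fU; rewrite /integrate.
    under eq_bigr do rewrite !ffunE mulrBl.
    rewrite sumrB; have := Hm f fU; have := wp f fU; rewrite /integrate => -> ->.
    by rewrite subrr.
  move=> z zM; rewrite !ffunE sum_ffunE.
  have [L0 L0s xz] := surj _ (fsvalP z) zM.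
  rewrite (bigD1_seq L0) //= big_seq_cond big1 ?addr0; last first.
    move=> L /andP[Ls' nL]; rewrite ffunE.
    apply/eqP; rewrite mulf_eq0; apply/orP; right.
    apply/negPn; rewrite mv //; apply/negP => /eqP E; move/negP: nL; apply.
    apply/eqP; apply: inj => //; rewrite xz; exact: (esym E).
  rewrite ffunE xz !evE.
  have -> : (m z / mu L0 z) *: mu L0 z = m z / mu L0 z * mu L0 z by [].
  rewrite divfK ?subrr // (mv _ z) //.
  by rewrite xz eqxx.
have -> : m = w by apply: subr0_eq.
exact: ws.
Qed.

End Core.

Unset Implicit Arguments.

Theorem theorem4 (R : realFieldType) (n : nat) (X : 'I_n -> choiceType)
    (Xne : forall i : 'I_n, X i) (S M : {fset point X}) :
  maximal_good R S M ->
  exists V : {vspace C R S},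
    [/\ forall mu : C R S, mu \in V <-> inUperp mu,
        \dim V = (#|` S| - #|` M|)%N,
        exists Ls : seq {fset point X},
          uniq Ls /\ forall L, L \in Ls <-> admissible_loop S M L
      & forall (Ls : seq {fset point X}) (mu : {fset point X} -> C R S),
          uniq Ls ->
          (forall L, L \in Ls <-> admissible_loop S M L) ->
          (forall L, admissible_loop S M L -> is_loop_measure L (mu L)) ->
          basis_of V [seq mu L | L <- Ls]].
Proof.
move=> mg; have [MS _ _] := mg.
pose d : point X := [ffun i => Xne i].
pose adm L := if excluded_middle_informative (admissible_loop S M L) then true else false.
pose Ls0 := [seq L <- enum_fset (fpowerset S) | adm L].
have uLs0 : uniq Ls0 by apply: filter_uniq; exact: fset_uniq.
have HLs0 : forall L, L \in Ls0 <-> admissible_loop S M L.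
  move=> L; rewrite mem_filter /adm; split.
    by case: excluded_middle_informative.
  move=> AL; case: excluded_middle_informative => // _ /=.
  have [xL xM] := xof_spec d AL.
  have [_ _ LS] := adm_sub MS AL xL xM.
  by rewrite fpowersetE.
pose mu0 L := epsilon (inhabits (0 : C R S)) (fun mu => is_loop_measure L mu).
have Hmu0 : forall L, admissible_loop S M L -> is_loop_measure L (mu0 L).
  move=> L AL; apply: epsilon_spec; exact: loop_measure_exists mg AL.
have [memV freeV sizeV] := core d mg uLs0 HLs0 Hmu0.
exists <<[seq mu0 L | L <- Ls0]>>%VS; split => //.
- by move/eqP: freeV => ->; rewrite size_map.
- by exists Ls0.
move=> Ls mu uLs HLs Hmu.
have [memV' freeV' _] := core d mg uLs HLs Hmu.
rewrite /basis_of freeV' andbT; apply/eqP/vspaceP => v.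
apply/idP/idP => H; [apply/memV; apply/memV' | apply/memV'; apply/memV] => //.
Qed.
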